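(* Let $A,B,H,K$ be events with $H\ne\emptyset$, $K\ne\emptyset$. For each coherent prevision assessment $(x,y,z)$ on $\{A|H,B|K,(A|H)\wedge(B|K)\}$ there exists $\lambda\in[0,+\infty]$ such that, as random quantities, $(A|H)\wedge(B|K)=T_\lambda(A|H,B|K)$.
   Context: Events are identified with their indicators; $\bar E$ is the negation of $E$. For $H\ne\emptyset$ the conditional event $E|H$ is true if $EH$ is true, false if $\bar EH$ is true, void if $\bar H$ is true; with $P(E|H)=x$ it is identified with the random quantity $EH+x\bar H$, and a conditional random quantity $X|H$ with prevision $\mu$ with $XH+\mu\bar H$. Coherence (de Finetti): an assessment $(\mu_1,\dots,\mu_m)$ on $\{X_1|H_1,\dots,X_m|H_m\}$ is coherent iff for all real stakes $s_i$ the gain $G=\sum_is_iH_i(X_i-\mu_i)$, restricted to $H_1\vee\dots\vee H_m$, satisfies $\min G\le0\le\max G$. Conjunction of two conditional events: given $P(A|H)=x$, $P(B|K)=y$ and $z=\mathbb P[(AHBK+x\bar HBK+y\bar KAH)|(H\vee K)]$, the conjunction is $(A|H)\wedge(B|K)=AHBK+x\bar HBK+y\bar KAH+z\bar H\bar K$, i.e. it equals $1$ if $AHBK$ is true, $0$ if $\bar AH\vee\bar BK$ is true, $x$ if $\bar HBK$ is true, $y$ if $AH\bar K$ is true, $z$ if $\bar H\bar K$ is true; its prevision is $z$. Frank t-norms $T_\lambda:[0,1]^2\to[0,1]$, $\lambda\in[0,+\infty]$: $T_0(x,y)=\min\{x,y\}$, $T_1(x,y)=xy$, $T_{+\infty}(x,y)=\max\{x+y-1,0\}$,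 and $T_\lambda(x,y)=\log_\lambda\big(1+\frac{(\lambda^x-1)(\lambda^y-1)}{\lambda-1}\big)$ otherwise. $T_\lambda(A|H,B|K)$ denotes the random quantity obtained by applying $T_\lambda$ pointwise to the values of $A|H$ and $B|K$. *)

(* Defs.v *)
From Stdlib Require Import Reals.
From Coquelicot Require Import Rbar.
Open Scope R_scope.

Definition ind (b : bool) : R := if b then 1 else 0.

(* The conditional event E|H with P(E|H) = x, as the random quantity
   EH + x (not H). Events are boolean predicates on a sample space Omega. *)
Definition cond_ev {Omega : Type} (E H : Omega -> bool) (x : R) (w : Omega) : R :=
  ind (andb (H w) (E w)) + x * ind (negb (H w)).

Definition conj_num {Omega : Type} (A H B K : Omega -> bool) (x y : R)
  (w : Omega) : R :=
  ind (andb (andb (andb (A w) (H w)) (B w)) (K w))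
  + x * ind (andb (andb (negb (H w)) (B w)) (K w))
  + y * ind (andb (andb (negb (K w)) (A w)) (H w)).

(* The conjunction (A|H) /\ (B|K) = AHBK + x~HBK + y~KAH + z~H~K,
   where z is the prevision of conj_num | (H \/ K). *)
Definition conj_ce {Omega : Type} (A H B K : Omega -> bool) (x y z : R)
  (w : Omega) : R :=
  conj_num A H B K x y w + z * ind (andb (negb (H w)) (negb (K w))).

(* De Finetti gain for the assessment (x,y,z) on
   {A|H, B|K, (conj_num)|(H \/ K)} with stakes s1 s2 s3. *)
Definition gain {Omega : Type} (A H B K : Omega -> bool) (x y z s1 s2 s3 : R)
  (w : Omega) : R :=
  s1 * ind (H w) * (ind (A w) - x)
  + s2 * ind (K w) * (ind (B w) - y)
  + s3 * ind (orb (H w) (K w)) * (conj_num A H B K x y w - z).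

(* Coherence: for all stakes, the gain restricted to H \/ K has
   min <= 0 <= max (G takes finitely many values, so min/max are attained). *)
Definition coherent3 {Omega : Type} (A H B K : Omega -> bool) (x y z : R) : Prop :=
  forall s1 s2 s3 : R,
    (exists w, orb (H w) (K w) = true /\ gain A H B K x y z s1 s2 s3 w <= 0) /\
    (exists w, orb (H w) (K w) = true /\ 0 <= gain A H B K x y z s1 s2 s3 w).

Definition frank (l : Rbar) (x y : R) : R :=
  match l with
  | p_infty => Rmax (x + y - 1) 0
  | m_infty => 0 (* not used: lambda is required to be >= 0 *)
  | Finite l =>
      if Req_EM_T l 0 then Rmin x y
      else if Req_EM_T l 1 then x * y
      else ln (1 + (Rpower l x - 1) * (Rpower l y - 1) / (l - 1)) / ln l
  end.

(* Main.v *)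
Require Import Defs.
From Stdlib Require Import Reals Lra Psatz.
From Coquelicot Require Import Rbar.
Open Scope R_scope.

Lemma ce_val {Omega} (E H : Omega -> bool) x w :
  cond_ev E H x w = if H w then (if E w then 1 else 0) else x.
Proof. unfold cond_ev, ind; destruct (H w), (E w); simpl; ring. Qed.

Lemma conj_val {Omega} (A H B K : Omega -> bool) x y z w :
  conj_ce A H B K x y z w =
  if H w then (if K w then (if A w then (if B w then 1 else 0) else 0) else (if A w then y else 0))
  else (if K w then (if B w then x else 0) else z).
Proof. unfold conj_ce, conj_num, ind; destruct (H w), (K w), (A w), (B w); simpl; ring. Qed.

Lemma worlds {Omega} (A H B K : Omega -> bool) x y z (f : R -> R -> R) :
  f 1 1 = 1 -> f 1 y = y -> f x 1 = x -> f 0 1 = 0 -> f 0 y = 0 -> f 0 0 = 0 ->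
  f 1 0 = 0 -> f x 0 = 0 -> f x y = z ->
  forall w, conj_ce A H B K x y z w = f (cond_ev A H x w) (cond_ev B K y w).
Proof.
  intros. rewrite conj_val, !ce_val.
  destruct (H w), (K w), (A w), (B w); simpl; auto.
Qed.

Lemma coh_neg {Omega} (A H B K : Omega -> bool) x y z s1 s2 s3 :
  coherent3 A H B K x y z ->
  (forall w, orb (H w) (K w) = true -> gain A H B K x y z s1 s2 s3 w < 0) -> False.
Proof.
  intros C G. destruct (C s1 s2 s3) as [_ [w [Hw Hg]]].
  specialize (G w Hw). lra.
Qed.

Lemma uv_le u v : u * v <= (u*u + v*v)/2.
Proof. pose proof (Rle_0_sqr (u - v)). unfold Rsqr in *. lra. Qed.

Lemma sq_le a b : (a-b)*(a-b) <= 2*(a*a) + 2*(b*b).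
Proof. pose proof (Rle_0_sqr (a + b)). unfold Rsqr in *. lra. Qed.

Ltac worldsolve H K A B := intros w Hw; unfold gain, conj_num, ind;
  destruct (H w), (K w), (A w), (B w); simpl in Hw |- *; try discriminate Hw.

Lemma x_range {Omega} (A H B K : Omega -> bool) x y z :
  coherent3 A H B K x y z -> z <> x * y -> 0 <= x <= 1.
Proof.
  intros C Hz. set (D := x*y - z). assert (HD : D <> 0) by (unfold D; lra).
  set (s2 := x / D). set (s3 := -1 / D).
  assert (E7 : s2 * (1 - y) + s3 * (x - z) = -1) by (unfold s2, s3, D in *; field; auto).
  assert (E8 : s2 * (0 - y) + s3 * (0 - z) = -1) by (unfold s2, s3, D in *; field; auto).
  set (C0 := (s2*s2 + 2 + 2*y*y)/2 + (s3*s3 + 2 + 2*x*x + 2*y*y + 2*z*z)/2 + 1).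
  assert (HC0d : C0 = (s2*s2 + 2 + 2*y*y)/2 + (s3*s3 + 2 + 2*x*x + 2*y*y + 2*z*z)/2 + 1) by reflexivity.
  clearbody C0.
  pose proof (uv_le s2 (1-y)). pose proof (uv_le s2 (0-y)).
  pose proof (uv_le s3 (1-z)). pose proof (uv_le s3 (0-z)).
  pose proof (uv_le s3 (y-z)). pose proof (uv_le s3 (x-z)).
  pose proof (sq_le 1 y). pose proof (sq_le 0 y). pose proof (sq_le 1 z). pose proof (sq_le 0 z).
  pose proof (sq_le y z). pose proof (sq_le x z).
  assert (0 <= s2*s2) by nra. assert (0 <= s3*s3) by nra. assert (0 <= x*x) by nra. assert (0 <= y*y) by nra. assert (0 <= z*z) by nra.
  split; apply Rnot_lt_le; intro Hx.
  - set (M := C0 / (-x)).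
    assert (HM : M * (-x) = C0) by (unfold M; field; lra).
    assert (HM0 : 0 < M) by (unfold M; apply Rdiv_lt_0_compat; lra).
    clearbody M s2 s3 D. apply (coh_neg A H B K x y z (-M) s2 s3 C). worldsolve H K A B. all: try lra.
  - set (M := C0 / (x - 1)).
    assert (HM : M * (x - 1) = C0) by (unfold M; field; lra).
    assert (HM0 : 0 < M) by (unfold M; apply Rdiv_lt_0_compat; lra).
    clearbody M s2 s3 D. apply (coh_neg A H B K x y z M s2 s3 C). worldsolve H K A B; try lra.
Qed.

Lemma gain_sym {Omega} (A H B K : Omega -> bool) x y z s1 s2 s3 w :
  gain A H B K x y z s1 s2 s3 w = gain B K A H y x z s2 s1 s3 w.
Proof. unfold gain, conj_num, ind; destruct (H w), (K w), (A w), (B w); simpl; ring. Qed.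

Lemma coh_sym {Omega} (A H B K : Omega -> bool) x y z :
  coherent3 A H B K x y z -> coherent3 B K A H y x z.
Proof.
  intros C s1 s2 s3. destruct (C s2 s1 s3) as [[w1 [h1 g1]] [w2 [h2 g2]]].
  split; [exists w1 | exists w2]; rewrite <- gain_sym; split; auto;
  [destruct (H w1), (K w1) | destruct (H w2), (K w2)]; simpl in *; auto.
Qed.

Lemma frechet {Omega} (A H B K : Omega -> bool) x y z :
  coherent3 A H B K x y z -> 0 <= x <= 1 -> 0 <= y <= 1 ->
  z <= x /\ z <= y /\ 0 <= z /\ x + y - 1 <= z.
Proof.
  intros C Hx Hy. split; [|split; [|split]]; apply Rnot_lt_le; intro Hc.
  - apply (coh_neg A H B K x y z (-1) 0 1 C). worldsolve H K A B; lra.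
  - apply (coh_neg A H B K x y z 0 (-1) 1 C). worldsolve H K A B; lra.
  - apply (coh_neg A H B K x y z 0 0 (-1) C). worldsolve H K A B; nra.
  - apply (coh_neg A H B K x y z 1 1 (-1) C). worldsolve H K A B; nra.
Qed.
Definition F (x y z t : R) := (exp (t*z) - 1)*(exp t - 1) - (exp (t*x) - 1)*(exp (t*y) - 1).

Lemma expK v : exp (-v) * exp v = 1.
Proof. rewrite <- exp_plus. replace (-v+v) with 0 by ring. apply exp_0. Qed.

Lemma e1 v : v <= exp v - 1.
Proof. pose proof (exp_ineq1_le v). lra. Qed.

Lemma e2 v : 1 - v <= exp (-v).
Proof. pose proof (exp_ineq1_le (-v)). lra. Qed.

Lemma e4 v : 0 <= v -> v*(1-v) <= 1 - exp (-v).
Proof.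
  intros hv. pose proof (expK v). pose proof (e1 v). pose proof (e2 v).
  pose proof (exp_pos (-v)). pose proof (exp_pos v).
  destruct (Rle_or_lt v 1).
  - assert (1 - exp (-v) = exp (-v) * (exp v - 1)) by lra. rewrite H5.
    rewrite (Rmult_comm v). apply Rmult_le_compat; lra.
  - assert (exp (-v) <= 1). { assert (exp (-v) * 1 <= exp (-v) * exp v) by (apply Rmult_le_compat_l; lra). lra. }
    nra.
Qed.

Lemma e5 v : (exp v - 1)*(1-v) <= v.
Proof.
  pose proof (expK v). pose proof (e2 v). pose proof (exp_pos v).
  assert (exp v * (1 - v) <= exp v * exp (-v)) by (apply Rmult_le_compat_l; lra).
  lra.
Qed.

Lemma e6 c : exp (-c) * (1 + c) <= 1.
Proof.
  pose proof (expK c). pose proof (exp_ineq1_le c). pose proof (exp_pos (-c)).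
  assert (exp (-c) * (1 + c) <= exp (-c) * exp c) by (apply Rmult_le_compat_l; lra). lra.
Qed.

Lemma e6' c : 3 <= c -> 4 * exp (-c) <= 1.
Proof. intros h. pose proof (e6 c). pose proof (exp_pos (-c)). nra. Qed.

Lemma small_pos x y z : 0 < x < 1 -> 0 < y < 1 -> 0 < z < x*y -> F x y z ((x*y - z)/4) < 0.
Proof.
  intros hx hy hz. unfold F. set (t := (x*y - z)/4).
  assert (hxy : x*y <= 1) by (assert (x*y <= x*1) by (apply Rmult_le_compat_l; lra); lra).
  assert (ht : 0 < t <= 1/4) by (unfold t; lra).
  assert (tdef : 4*t = x*y - z) by (unfold t; lra). clearbody t.
  pose proof (e1 (t*z)). pose proof (e1 t). pose proof (e1 (t*x)). pose proof (e1 (t*y)).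
  pose proof (e5 (t*z)). pose proof (e5 t).
  set (a := exp (t*z) - 1) in *. set (b := exp t - 1) in *.
  set (c := exp (t*x) - 1) in *. set (d := exp (t*y) - 1) in *.
  assert (0 <= t*z) by nra. assert (t*z <= t) by nra.
  assert (K1 : 0 < 1 - t*z) by nra. assert (K2 : 0 < 1 - t) by lra.
  assert (P1 : a*b*((1-t*z)*(1-t)) <= (t*z)*t).
  { replace (a*b*((1-t*z)*(1-t))) with ((a*(1-t*z))*(b*(1-t))) by ring.
    apply Rmult_le_compat; nra. }
  assert (P2 : (t*x)*(t*y) <= c*d) by (apply Rmult_le_compat; nra).
  assert (P3 : (t*z)*t < (t*x)*(t*y)*((1-t*z)*(1-t))).
  { assert (Q : z < x*y*((1-t*z)*(1-t))).
    { assert ((1-t*z)*(1-t) >= 1 - 2*t) by nra.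
      assert (x*y*((1-t*z)*(1-t)) >= x*y*(1-2*t)) by (apply Rle_ge, Rmult_le_compat_l; nra).
      nra. }
    assert (0 < t*t) by nra. nra. }
  assert (P4 : c*d*((1-t*z)*(1-t)) >= (t*x)*(t*y)*((1-t*z)*(1-t))).
  { apply Rle_ge, Rmult_le_compat_r; nra. }
  assert (0 < (1-t*z)*(1-t)) by nra.
  assert (a*b*((1-t*z)*(1-t)) < c*d*((1-t*z)*(1-t))) by lra.
  nra.
Qed.

Lemma expm_le1 c : 0 <= c -> exp (-c) <= 1.
Proof. intros h. pose proof (e6 c). pose proof (exp_pos (-c)). nra. Qed.

Lemma small_neg x y z : 0 < x < 1 -> 0 < y < 1 -> x*y < z <= 1 -> 0 < F x y z (-((z - x*y)/4)).
Proof.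
  intros hx hy hz. unfold F. set (s := (z - x*y)/4).
  assert (hxy : 0 < x*y) by nra.
  assert (hs : 0 < s <= 1/4) by (unfold s; lra).
  assert (sdef : 4*s = z - x*y) by (unfold s; lra). clearbody s.
  replace (-s*z) with (-(s*z)) by ring. replace (-s*x) with (-(s*x)) by ring.
  replace (-s*y) with (-(s*y)) by ring.
  assert (0 <= s*z) by nra. assert (s*z <= s) by nra.
  assert (0 <= s*x) by nra. assert (0 <= s*y) by nra.
  pose proof (e4 (s*z) ltac:(lra)). pose proof (e4 s ltac:(lra)).
  pose proof (e2 (s*x)). pose proof (e2 (s*y)).
  pose proof (expm_le1 (s*x) ltac:(lra)). pose proof (expm_le1 (s*y) ltac:(lra)).
  assert (0 <= 1 - exp (-(s*x)) <= s*x) by lra. assert (0 <= 1 - exp (-(s*y)) <= s*y) by lra.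
  set (p := 1 - exp (-(s*z))) in *. set (q := 1 - exp (-s)) in *.
  set (u := 1 - exp (-(s*x))) in *. set (v := 1 - exp (-(s*y))) in *.
  replace ((exp (- (s * z)) - 1) * (exp (- s) - 1) - (exp (- (s * x)) - 1) * (exp (- (s * y)) - 1))
    with (p*q - u*v) by (unfold p, q, u, v; ring).
  assert (P1 : (s*z*(1-s*z))*(s*(1-s)) <= p*q) by (apply Rmult_le_compat; nra).
  assert (P2 : u*v <= (s*x)*(s*y)) by (apply Rmult_le_compat; nra).
  assert (P3 : (s*x)*(s*y) < (s*z*(1-s*z))*(s*(1-s))).
  { assert (Q : x*y < z*(1-s*z)*(1-s)).
    { assert (z*(1-s*z)*(1-s) >= z - 2*s) by nra. lra. }
    assert (0 < s*s) by nra. nra. }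
  lra.
Qed.

Lemma large_pos x y z : 0 < z -> x + y - 1 < z -> 0 < F x y z (3/z + 3/(1+z-x-y) + 3).
Proof.
  intros hz hl. unfold F. set (T := 3/z + 3/(1+z-x-y) + 3).
  assert (h1 : 3 <= T*z).
  { unfold T. assert (0 < 3/(1+z-x-y)) by (apply Rdiv_lt_0_compat; lra).
    replace ((3/z + 3/(1+z-x-y) + 3)*z) with (3 + (3/(1+z-x-y) + 3)*z) by (field; lra). nra. }
  assert (h2 : 3 <= T*(1+z-x-y)).
  { unfold T. assert (0 < 3/z) by (apply Rdiv_lt_0_compat; lra).
    replace ((3/z + 3/(1+z-x-y) + 3)*(1+z-x-y)) with (3 + (3/z + 3)*(1+z-x-y)) by (field; lra). nra. }
  assert (h3 : 3 <= T).
  { unfold T. assert (0 < 3/z) by (apply Rdiv_lt_0_compat; lra).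
    assert (0 < 3/(1+z-x-y)) by (apply Rdiv_lt_0_compat; lra). lra. }
  clearbody T.
  set (P := exp (T*z) * exp T).
  assert (E1 : exp (T*z) = P * exp (-T)) by (unfold P; rewrite Rmult_assoc, (Rmult_comm (exp T)), expK; ring).
  assert (E2 : exp T = P * exp (-(T*z))) by (unfold P; rewrite (Rmult_comm (exp (T*z))), Rmult_assoc, (Rmult_comm (exp (T*z))), expK; ring).
  assert (E3 : exp (T*x) * exp (T*y) = P * exp (-(T*(1+z-x-y)))).
  { unfold P. rewrite <- !exp_plus. f_equal. ring. }
  pose proof (e6' T ltac:(lra)). pose proof (e6' (T*z) ltac:(lra)). pose proof (e6' (T*(1+z-x-y)) ltac:(lra)).
  assert (0 < P) by (unfold P; pose proof (exp_pos (T*z)); pose proof (exp_pos T); nra).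
  pose proof (exp_pos (T*x)). pose proof (exp_pos (T*y)).
  assert (P * exp (-T) <= P/4) by nra.
  assert (P * exp (-(T*z)) <= P/4) by nra.
  assert (P * exp (-(T*(1+z-x-y))) <= P/4) by nra.
  unfold P in *. nra.
Qed.

Lemma large_neg x y z : z < x -> z < y -> F x y z (-(3 + 3/(x-z) + 3/(y-z))) < 0.
Proof.
  intros hx hy. unfold F. set (S := 3 + 3/(x-z) + 3/(y-z)).
  assert (h1 : 3 <= S*(x-z)).
  { unfold S. assert (0 < 3/(y-z)) by (apply Rdiv_lt_0_compat; lra).
    replace ((3 + 3/(x-z) + 3/(y-z))*(x-z)) with (3 + (3 + 3/(y-z))*(x-z)) by (field; lra). nra. }
  assert (h2 : 3 <= S*(y-z)).
  { unfold S. assert (0 < 3/(x-z)) by (apply Rdiv_lt_0_compat; lra).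
    replace ((3 + 3/(x-z) + 3/(y-z))*(y-z)) with (3 + (3 + 3/(x-z))*(y-z)) by (field; lra). nra. }
  assert (h3 : 3 <= S).
  { unfold S. assert (0 < 3/(x-z)) by (apply Rdiv_lt_0_compat; lra).
    assert (0 < 3/(y-z)) by (apply Rdiv_lt_0_compat; lra). lra. }
  clearbody S.
  replace (-S*z) with (-(S*z)) by ring. replace (-S*x) with (-(S*x)) by ring.
  replace (-S*y) with (-(S*y)) by ring.
  set (Q := exp (-(S*z))).
  assert (E1 : exp (-(S*x)) = Q * exp (-(S*(x-z)))) by (unfold Q; rewrite <- exp_plus; f_equal; ring).
  assert (E2 : exp (-(S*y)) = Q * exp (-(S*(y-z)))) by (unfold Q; rewrite <- exp_plus; f_equal; ring).
  pose proof (e6' S ltac:(lra)). pose proof (e6' (S*(x-z)) ltac:(lra)). pose proof (e6' (S*(y-z)) ltac:(lra)).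
  assert (0 < Q) by (unfold Q; apply exp_pos).
  pose proof (exp_pos (-S)). pose proof (exp_pos (-(S*x))). pose proof (exp_pos (-(S*y))).
  assert (Q * exp (-S) <= Q/4) by nra.
  assert (Q * exp (-(S*(x-z))) <= Q/4) by nra.
  assert (Q * exp (-(S*(y-z))) <= Q/4) by nra.
  assert (0 < exp (-(S*x)) * exp (-(S*y))) by nra.
  rewrite E1, E2 in *. nra.
Qed.

Lemma F_cont x y z : continuity (F x y z).
Proof. unfold F. reg. Qed.

Lemma root_exists x y z : 0 < x < 1 -> 0 < y < 1 -> 0 < z -> z < x -> z < y -> x + y - 1 < z ->
  z <> x*y -> exists t, t <> 0 /\ F x y z t = 0.
Proof.
  intros hx hy hz zx zy zl hne.
  destruct (Rlt_or_le z (x*y)) as [hlt|hle].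
  - assert (ht : (x*y - z)/4 < 3/z + 3/(1+z-x-y) + 3).
    { assert (0 < 3/z) by (apply Rdiv_lt_0_compat; lra).
      assert (0 < 3/(1+z-x-y)) by (apply Rdiv_lt_0_compat; lra).
      assert (x*y <= 1) by nra. lra. }
    destruct (IVT (F x y z) _ _ (F_cont x y z) ht (small_pos x y z hx hy ltac:(lra))
      (large_pos x y z hz zl)) as [t [[h1 h2] h3]].
    exists t. split; auto. assert (0 < (x*y - z)/4) by lra. lra.
  - assert (hlt : x*y < z) by lra.
    assert (ht : -(3 + 3/(x-z) + 3/(y-z)) < -((z - x*y)/4)).
    { assert (0 < 3/(x-z)) by (apply Rdiv_lt_0_compat; lra).
      assert (0 < 3/(y-z)) by (apply Rdiv_lt_0_compat; lra). assert (0 < x*y) by nra. lra. }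
    destruct (IVT (F x y z) _ _ (F_cont x y z) ht (large_neg x y z zx zy)
      (small_neg x y z hx hy ltac:(lra))) as [t [[h1 h2] h3]].
    exists t. split; auto. assert (0 < (z - x*y)/4) by lra. lra.
Qed.

Lemma expt_ne1 t : t <> 0 -> exp t - 1 <> 0.
Proof. intros h e. apply h. rewrite <- (ln_exp t). replace (exp t) with 1 by lra. apply ln_1. Qed.

Lemma frank_exp t a b : t <> 0 ->
  frank (Finite (exp t)) a b = ln (1 + (exp (t*a) - 1) * (exp (t*b) - 1) / (exp t - 1)) / t.
Proof.
  intros h. pose proof (expt_ne1 t h). unfold frank.
  destruct (Req_EM_T (exp t) 0) as [e|_]; [pose proof (exp_pos t); lra|].
  destruct (Req_EM_T (exp t) 1) as [e|_]; [lra|].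
  unfold Rpower. rewrite ln_exp. rewrite (Rmult_comm a t), (Rmult_comm b t). reflexivity.
Qed.

Lemma frank_a1 t a : t <> 0 -> frank (Finite (exp t)) a 1 = a.
Proof.
  intros h. pose proof (expt_ne1 t h). rewrite frank_exp by auto. rewrite Rmult_1_r.
  replace (1 + (exp (t*a) - 1) * (exp t - 1) / (exp t - 1)) with (exp (t*a)) by (field; auto).
  rewrite ln_exp. field; auto.
Qed.

Lemma frank_1b t b : t <> 0 -> frank (Finite (exp t)) 1 b = b.
Proof.
  intros h. pose proof (expt_ne1 t h). rewrite frank_exp by auto. rewrite Rmult_1_r.
  replace (1 + (exp t - 1) * (exp (t*b) - 1) / (exp t - 1)) with (exp (t*b)) by (field; auto).
  rewrite ln_exp. field; auto.
Qed.

Lemma frank_0b t b : t <> 0 -> frank (Finite (exp t)) 0 b = 0.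
Proof.
  intros h. pose proof (expt_ne1 t h). rewrite frank_exp by auto. rewrite Rmult_0_r, exp_0.
  replace (1 + (1 - 1) * (exp (t*b) - 1) / (exp t - 1)) with 1 by (field; auto).
  rewrite ln_1. field; auto.
Qed.

Lemma frank_a0 t a : t <> 0 -> frank (Finite (exp t)) a 0 = 0.
Proof.
  intros h. pose proof (expt_ne1 t h). rewrite frank_exp by auto. rewrite Rmult_0_r, exp_0.
  replace (1 + (exp (t*a) - 1) * (1 - 1) / (exp t - 1)) with 1 by (field; auto).
  rewrite ln_1. field; auto.
Qed.

Lemma frank_xy t x y z : t <> 0 -> F x y z t = 0 -> frank (Finite (exp t)) x y = z.
Proof.
  intros h hF. pose proof (expt_ne1 t h). unfold F in hF. rewrite frank_exp by auto.
  replace (1 + (exp (t*x) - 1) * (exp (t*y) - 1) / (exp t - 1)) with (exp (t*z)).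
  - rewrite ln_exp. field; auto.
  - apply (Rmult_eq_reg_r (exp t - 1)); auto. field_simplify; auto. lra.
Qed.

Theorem theorem15 (Omega : Type) (A B H K : Omega -> bool)
  (HH : exists w, H w = true) (HK : exists w, K w = true)
  (x y z : R) (Hcoh : coherent3 A H B K x y z) :
  exists l : Rbar, Rbar_le (Finite 0) l /\
    forall w : Omega,
      conj_ce A H B K x y z w = frank l (cond_ev A H x w) (cond_ev B K y w).
Proof.
  destruct (Req_dec z (x*y)) as [e|ne].
  { exists (Finite 1). split; [simpl; lra|].
    assert (fr : forall a b, frank (Finite 1) a b = a*b).
    { intros; unfold frank. destruct (Req_EM_T 1 0); [lra|].
      destruct (Req_EM_T 1 1); [reflexivity|lra]. }
    apply worlds; rewrite fr; try ring. auto. }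
  pose proof (x_range A H B K x y z Hcoh ne) as hx.
  assert (hy : 0 <= y <= 1).
  { apply (x_range B K A H y x z (coh_sym A H B K x y z Hcoh)). rewrite Rmult_comm. auto. }
  destruct (frechet A H B K x y z Hcoh hx hy) as [zx [zy [z0 zl]]].
  destruct (Req_dec z (Rmin x y)) as [em|nm].
  { exists (Finite 0). split; [simpl; lra|].
    assert (fr : forall a b, frank (Finite 0) a b = Rmin a b).
    { intros; unfold frank. destruct (Req_EM_T 0 0); [reflexivity|lra]. }
    apply worlds; rewrite fr; unfold Rmin in *; repeat destruct Rle_dec; lra. }
  destruct (Req_dec z (Rmax (x+y-1) 0)) as [eM|nM].
  { exists p_infty. split; [simpl; auto|].
    apply worlds; unfold frank, Rmax in *; repeat destruct Rle_dec; lra. }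
  assert (z < x /\ z < y /\ 0 < z /\ x + y - 1 < z) as [zx' [zy' [z0' zl']]].
  { unfold Rmin, Rmax in *. destruct (Rle_dec x y), (Rle_dec (x+y-1) 0); lra. }
  destruct (root_exists x y z ltac:(lra) ltac:(lra) z0' zx' zy' zl' ne) as [t [tn tF]].
  exists (Finite (exp t)). split; [simpl; left; apply exp_pos|].
  apply worlds; auto using frank_a1, frank_1b, frank_0b, frank_a0, frank_xy.
Qed.
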